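(* Let $\mathbb X=\langle X,\rho\rangle$ and $\mathbb Y=\langle Y,\sigma\rangle$ be structures of size $\omega_1$ with $\rho,\sigma$ equivalence relations, each having countably infinitely many singleton classes and exactly one class of size $n$ for each $n\ge2$, such that the only infinite class of $\mathbb X$ is a single class $X'$ with $|X'|=\omega_1$, and the infinite classes of $\mathbb Y$ are exactly two classes $Y',Y''$ with $|Y'|=|Y''|=\omega_1$. Then $\mathbb X\equiv\mathbb Y$, $\mathbb X\equiv_{\mathcal P_{\infty\omega}}\mathbb Y$, $\mathbb X\not\sim_c\mathbb Y$, and $\mathbb X\not\equiv_{\infty\omega}\mathbb Y$.
   Context: The language has one binary relation symbol $R$. A condensation from $\langle X,\rho\rangle$ onto $\langle Y,\sigma\rangle$ is a bijection $F:X\to Y$ with $x\,\rho\,x'\Rightarrow F(x)\,\sigma\,F(x')$; $\mathbb X\sim_c\mathbb Y$ means condensations exist in both directions. $\equiv$ is first order elementary equivalence, $\equiv_{\infty\omega}$ equivalence for all $L_{\infty\omega}$-sentences. $\mathcal P_0$ consists of all atomic formulas ($v_\alpha=v_\beta$, $R(v_\alpha,v_\beta)$) and all $\neg\,v_\alpha=v_\beta$; $\mathcal P_{\infty\omega}$ is the closure of $\mathcal P_0$ under $\forall v$, $\exists v$ and conjunctions and disjunctions of arbitrary sets of formulas (no negation); $\equiv_{\mathcal P_{\infty\omega}}$ means satisfying the same $\mathcal P_{\infty\omega}$-sentences. *)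

(* Defs.v *)
From Stdlib Require Import Arith.

Definition equipotent (A B : Type) : Prop :=
  exists f : A -> B, (forall x y, f x = f y -> x = y) /\ (forall b, exists a, f a = b).

Definition has_size (A : Type) (n : nat) : Prop := equipotent A {k : nat | k < n}.

Definition finite_type (A : Type) : Prop := exists n, has_size A n.

Definition countable (A : Type) : Prop :=
  exists f : A -> nat, forall x y, f x = f y -> x = y.

Definition countably_infinite (A : Type) : Prop := equipotent nat A.

(* |A| = omega_1 : A carries a well-ordering of order type omega_1, i.e. a
   strict well-order whose domain is uncountable but all of whose proper initial
   segments are countable. *)
Definition size_omega1 (A : Type) : Prop :=
  exists lt : A -> A -> Prop,
    (forall x, ~ lt x x) /\
    (forall x y z, lt x y -> lt y z -> lt x z) /\
    (forall x y, lt x y \/ x = y \/ lt y x) /\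
    well_founded lt /\
    ~ countable A /\
    (forall x, countable {y : A | lt y x}).

Definition is_equivalence {X : Type} (rho : X -> X -> Prop) : Prop :=
  (forall x, rho x x) /\ (forall x y, rho x y -> rho y x) /\
  (forall x y z, rho x y -> rho y z -> rho x z).

Definition cls {X : Type} (rho : X -> X -> Prop) (x : X) : Type := {y : X | rho x y}.

Definition singleton_pts {X : Type} (rho : X -> X -> Prop) : Type :=
  {x : X | forall y, rho x y -> y = x}.

Definition finite_classes_spec {X : Type} (rho : X -> X -> Prop) : Prop :=
  countably_infinite (singleton_pts rho) /\
  (forall n, 2 <= n ->
     exists x, has_size (cls rho x) n /\
       (forall x', has_size (cls rho x') n -> rho x x')).

Definition infinite_class {X : Type} (rho : X -> X -> Prop) (x : X) : Prop :=
  ~ finite_type (cls rho x).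

Definition condensation {X Y : Type} (rho : X -> X -> Prop) (sigma : Y -> Y -> Prop)
  (F : X -> Y) : Prop :=
  (forall x y, F x = F y -> x = y) /\ (forall b, exists a, F a = b) /\
  (forall x x', rho x x' -> sigma (F x) (F x')).

Definition condensable {X Y : Type} (rho : X -> X -> Prop) (sigma : Y -> Y -> Prop) : Prop :=
  exists F, condensation rho sigma F.

Definition bi_condensable {X Y : Type} (rho : X -> X -> Prop) (sigma : Y -> Y -> Prop) : Prop :=
  condensable rho sigma /\ condensable sigma rho.

Definition upd {X : Type} (a : nat -> X) (i : nat) (x : X) : nat -> X :=
  fun j => if Nat.eqb j i then x else a j.

Inductive fo : Type :=
| foEq  (i j : nat)
| foR   (i j : nat)
| foNot (p : fo)
| foAnd (p q : fo)
| foOr  (p q : fo)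
| foAll (i : nat) (p : fo)
| foEx  (i : nat) (p : fo).

Fixpoint fo_sat {X : Type} (rho : X -> X -> Prop) (a : nat -> X) (p : fo) : Prop :=
  match p with
  | foEq i j => a i = a j
  | foR i j => rho (a i) (a j)
  | foNot q => ~ fo_sat rho a q
  | foAnd q r => fo_sat rho a q /\ fo_sat rho a r
  | foOr q r => fo_sat rho a q \/ fo_sat rho a r
  | foAll i q => forall x, fo_sat rho (upd a i x) q
  | foEx i q => exists x, fo_sat rho (upd a i x) q
  end.

Inductive fo_free (v : nat) : fo -> Prop :=
| fofree_eq i j : (v = i \/ v = j) -> fo_free v (foEq i j)
| fofree_R i j : (v = i \/ v = j) -> fo_free v (foR i j)
| fofree_not p : fo_free v p -> fo_free v (foNot p)
| fofree_and1 p q : fo_free v p -> fo_free v (foAnd p q)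
| fofree_and2 p q : fo_free v q -> fo_free v (foAnd p q)
| fofree_or1 p q : fo_free v p -> fo_free v (foOr p q)
| fofree_or2 p q : fo_free v q -> fo_free v (foOr p q)
| fofree_all i p : v <> i -> fo_free v p -> fo_free v (foAll i p)
| fofree_ex i p : v <> i -> fo_free v p -> fo_free v (foEx i p).

Definition fo_sentence (p : fo) : Prop := forall v, ~ fo_free v p.

(* X ≡ Y : same first-order sentences (truth of a sentence = truth under every
   assignment; the structures considered are nonempty) *)
Definition elem_equiv {X Y : Type} (rho : X -> X -> Prop) (sigma : Y -> Y -> Prop) : Prop :=
  forall p, fo_sentence p ->
    ((forall a, fo_sat rho a p) <-> (forall b, fo_sat sigma b p)).

Inductive formula : Type :=
| fEq  (i j : nat)
| fR   (i j : nat)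
| fNot (p : formula)
| fAnd (I : Type) (ps : I -> formula)
| fOr  (I : Type) (ps : I -> formula)
| fAll (i : nat) (p : formula)
| fEx  (i : nat) (p : formula).

Fixpoint sat {X : Type} (rho : X -> X -> Prop) (a : nat -> X) (p : formula) : Prop :=
  match p with
  | fEq i j => a i = a j
  | fR i j => rho (a i) (a j)
  | fNot q => ~ sat rho a q
  | fAnd J ps => forall k : J, sat rho a (ps k)
  | fOr J ps => exists k : J, sat rho a (ps k)
  | fAll i q => forall x, sat rho (upd a i x) q
  | fEx i q => exists x, sat rho (upd a i x) q
  end.

Inductive free (v : nat) : formula -> Prop :=
| free_eq i j : (v = i \/ v = j) -> free v (fEq i j)
| free_R i j : (v = i \/ v = j) -> free v (fR i j)
| free_not p : free v p -> free v (fNot p)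
| free_and I ps k : free v (ps k) -> free v (fAnd I ps)
| free_or I ps k : free v (ps k) -> free v (fOr I ps)
| free_all i p : v <> i -> free v p -> free v (fAll i p)
| free_ex i p : v <> i -> free v p -> free v (fEx i p).

Definition sentence (p : formula) : Prop := forall v, ~ free v p.

Inductive positive : formula -> Prop :=
| pos_eq i j : positive (fEq i j)
| pos_R i j : positive (fR i j)
| pos_neq i j : positive (fNot (fEq i j))
| pos_and I ps : (forall k, positive (ps k)) -> positive (fAnd I ps)
| pos_or I ps : (forall k, positive (ps k)) -> positive (fOr I ps)
| pos_all i p : positive p -> positive (fAll i p)
| pos_ex i p : positive p -> positive (fEx i p).

Definition infeq {X Y : Type} (rho : X -> X -> Prop) (sigma : Y -> Y -> Prop) : Prop :=
  forall p, sentence p ->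
    ((forall a, sat rho a p) <-> (forall b, sat sigma b p)).

Definition pos_equiv {X Y : Type} (rho : X -> X -> Prop) (sigma : Y -> Y -> Prop) : Prop :=
  forall p, sentence p -> positive p ->
    ((forall a, sat rho a p) <-> (forall b, sat sigma b p)).

(* Main.v *)
Require Import Defs.
From Stdlib Require Import Arith Lia List Classical ClassicalEpsilon ProofIrrelevance.
Import ListNotations.

Definition AL {A : Type} (R : A -> A -> Prop) (n : nat) (x : A) : Prop :=
  exists l : list A, NoDup l /\ length l = n /\ forall w, In w l -> R x w.
Definition EX {A : Type} (R : A -> A -> Prop) (n : nat) (x : A) : Prop :=
  AL R n x /\ ~ AL R (S n) x.

Definition dec {A : Type} : forall x y : A, {x = y} + {x <> y} :=
  fun x y => excluded_middle_informative (x = y).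

Lemma sig_eq {A : Type} (P : A -> Prop) (u v : sig P) : proj1_sig u = proj1_sig v -> u = v.
Proof. destruct u, v; simpl; intros; subst; f_equal; apply proof_irrelevance. Qed.

Lemma AL_0 {A} (R : A -> A -> Prop) x : AL R 0 x.
Proof. exists []; repeat split; try constructor; simpl; tauto. Qed.

Lemma AL_1 {A} (R : A -> A -> Prop) x : R x x -> AL R 1 x.
Proof. intro H; exists [x]; split; [constructor; [simpl; tauto| constructor] | split; [reflexivity| intros w [Hw|[]]; subst; auto]]. Qed.

Lemma AL_S {A} (R : A -> A -> Prop) n x : AL R (S n) x -> AL R n x.
Proof.
  intros [l [H1 [H2 H3]]]. destruct l as [|w l]; [discriminate|].
  exists l. apply NoDup_cons_iff in H1. simpl in H2. split; [tauto|split; [lia|]].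
  intros; apply H3; simpl; auto.
Qed.

Lemma AL_mono {A} (R : A -> A -> Prop) n m x : AL R n x -> m <= n -> AL R m x.
Proof.
  intros H Hle. induction Hle; auto. apply IHHle, AL_S, H.
Qed.

Lemma AL_cls {A} (R : A -> A -> Prop) n x x' : is_equivalence R -> R x x' -> AL R n x -> AL R n x'.
Proof.
  intros [Hr [Hs Ht]] Hx [l [H1 [H2 H3]]]. exists l; repeat split; auto.
  intros w Hw; eauto.
Qed.

Lemma EX_cls {A} (R : A -> A -> Prop) n x x' : is_equivalence R -> R x x' -> EX R n x -> EX R n x'.
Proof.
  intros He Hx [H1 H2]. split. eapply AL_cls; eauto.
  intro H; apply H2. eapply AL_cls; eauto. destruct He as [? [? ?]]; auto.
Qed.

Lemma EX_AL {A} (R : A -> A -> Prop) n m x : EX R n x -> (AL R m x <-> m <= n).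
Proof.
  intros [H1 H2]; split; intro H.
  - destruct (le_lt_dec m n); auto. exfalso; apply H2; eapply AL_mono; eauto.
  - eapply AL_mono; eauto.
Qed.

Lemma EX_uniq {A} (R : A -> A -> Prop) n m x : EX R n x -> EX R m x -> n = m.
Proof.
  intros H1 H2. pose proof (proj1 (EX_AL _ _ n _ H2) (proj1 H1)).
  pose proof (proj1 (EX_AL _ _ m _ H1) (proj1 H2)). lia.
Qed.

Lemma fresh {A} (R : A -> A -> Prop) n x (l : list A) :
  AL R n x -> length l < n -> exists w, R x w /\ ~ In w l.
Proof.
  intros [k [H1 [H2 H3]]] Hlt. apply NNPP; intro Hn.
  assert (incl k l).
  { intros w Hw. apply NNPP; intro Hw'. apply Hn. exists w; auto. }
  pose proof (NoDup_incl_length H1 H). lia.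
Qed.

Lemma classify {A} (R : A -> A -> Prop) T x : AL R T x \/ exists s, s < T /\ EX R s x.
Proof.
  induction T.
  - left; apply AL_0.
  - destruct IHT as [H|[s [Hs H]]].
    + destruct (classic (AL R (S T) x)); auto. right; exists T; split; auto; split; auto.
    + right; exists s; split; auto.
Qed.

Lemma classify_inf {A} (R : A -> A -> Prop) x : R x x ->
  (forall n, AL R n x) \/ exists n, 1 <= n /\ EX R n x.
Proof.
  intro Hr. destruct (classic (forall n, AL R n x)); auto. right.
  apply not_all_ex_not in H. destruct H as [n Hn].
  destruct (classify R n x) as [H|[s [Hs H]]]; [tauto|].
  exists s; split; auto. destruct s; [|lia]. exfalso; apply (proj2 H), AL_1, Hr.
Qed.

Lemma EX1_single {A} (R : A -> A -> Prop) x w : R x x -> EX R 1 x -> R x w -> w = x.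
Proof.
  intros Hr [_ H] Hw. apply NNPP; intro Hne. apply H. exists [w; x].
  split; [|split; [reflexivity|]].
  - constructor. simpl; intuition. repeat constructor; simpl; auto.
  - intros v [Hv|[Hv|[]]]; subst; auto.
Qed.
Lemma NoDup_map_inj {A B} (f : A -> B) (l : list A) :
  (forall a b, In a l -> In b l -> f a = f b -> a = b) -> NoDup l -> NoDup (map f l).
Proof.
  induction l as [|a l IH]; simpl; intros Hi Hn; constructor.
  - intro Hin. apply in_map_iff in Hin. destruct Hin as [b [Hb Hbl]].
    apply NoDup_cons_iff in Hn. assert (b = a) by (apply Hi; auto). subst; tauto.
  - apply IH; auto. apply NoDup_cons_iff in Hn; tauto.
Qed.

Lemma bound_len (l : list nat) n : NoDup l -> (forall k, In k l -> k < n) -> length l <= n.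
Proof.
  intros H1 H2. rewrite <- (length_seq n 0). apply NoDup_incl_length; auto.
  intros k Hk. apply in_seq. specialize (H2 k Hk). lia.
Qed.

Lemma hs_EX {A} (R : A -> A -> Prop) n x : has_size (cls R x) n -> EX R n x.
Proof.
  intros [f [Hinj Hsur]]. split.
  - assert (forall m, m <= n -> exists l, NoDup l /\ length l = m /\
        forall w, In w l -> exists H : R x w, proj1_sig (f (exist _ w H)) < m) as Hm.
    { induction m; intro Hle.
      - exists []; simpl; repeat split; [constructor|tauto].
      - destruct IHm as [l [H1 [H2 H3]]]; [lia|].
        assert (Hmn : m < n) by lia.
        destruct (Hsur (exist _ m Hmn)) as [[w Hw] Hfw].
        exists (w :: l). split; [|split].
        + constructor; auto. intro Hin. destruct (H3 w Hin) as [H' Hlt].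
          assert (exist _ w H' = exist (fun y => R x y) w Hw) by (apply sig_eq; reflexivity).
          rewrite H, Hfw in Hlt; simpl in Hlt; lia.
        + simpl; lia.
        + intros v [Hv|Hv].
          * subst v. exists Hw. rewrite Hfw; simpl; lia.
          * destruct (H3 v Hv) as [H' Hlt]; exists H'; lia. }
    destruct (Hm n (le_n n)) as [l [H1 [H2 H3]]]. exists l; repeat split; auto.
    intros w Hw; destruct (H3 w Hw); auto.
  - intros [l [H1 [H2 H3]]].
    set (h := fun w => match excluded_middle_informative (R x w) with
                       | left H => proj1_sig (f (exist _ w H)) | right _ => 0 end).
    assert (NoDup (map h l)).
    { apply NoDup_map_inj; auto. intros a b Ha Hb. unfold h.
      destruct (excluded_middle_informative (R x a)) as [Ra|Ra]; [|exfalso; auto].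
      destruct (excluded_middle_informative (R x b)) as [Rb|Rb]; [|exfalso; auto].
      intro Heq. apply sig_eq in Heq. apply Hinj in Heq. inversion Heq; auto. }
    apply bound_len with (n := n) in H.
    + rewrite length_map in H; lia.
    + intros k Hk. apply in_map_iff in Hk. destruct Hk as [w [Hw Hwl]]. subst k. unfold h.
      destruct (excluded_middle_informative (R x w)); [apply proj2_sig| ].
      exfalso; auto.
Qed.

Lemma bij_equip {A B} (g : B -> A) : (forall a b, g a = g b -> a = b) -> (forall a, exists b, g b = a) -> equipotent A B.
Proof.
  intros Hi Hs. exists (fun a => proj1_sig (constructive_indefinite_description _ (Hs a))).
  split.
  - intros a a' H. destruct (constructive_indefinite_description _ (Hs a)) as [b Hb].
    destruct (constructive_indefinite_description _ (Hs a')) as [b' Hb']. simpl in H. subst; auto.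
  - intro b. exists (g b). destruct (constructive_indefinite_description _ (Hs (g b))) as [b' Hb'].
    simpl. auto.
Qed.

Lemma EX_hs {A} (R : A -> A -> Prop) n x : EX R n x -> has_size (cls R x) n.
Proof.
  intros [[l [H1 [H2 H3]]] H4].
  assert (Hall : forall w, R x w -> In w l).
  { intros w Hw. apply NNPP; intro Hn. apply H4. exists (w :: l). split; [constructor; auto|].
    split; [simpl; lia|]. intros v [Hv|Hv]; subst; auto. }
  assert (Hk : forall k, k < n -> R x (nth k l x)).
  { intros k Hk. apply H3. apply nth_In. lia. }
  unfold has_size.
  apply (bij_equip (fun k : {k | k < n} => exist (fun y => R x y) (nth (proj1_sig k) l x) (Hk _ (proj2_sig k)))).
  - intros [a Ha] [b Hb] Heq. apply sig_eq; simpl.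
    apply (f_equal (@proj1_sig _ _)) in Heq; simpl in Heq.
    eapply NoDup_nth; eauto; lia.
  - intros [w Hw]. destruct (In_nth l w x (Hall w Hw)) as [k [Hk1 Hk2]].
    assert (Hkn : k < n) by lia. exists (exist _ k Hkn). apply sig_eq; simpl. auto.
Qed.

Lemma hs_countable {A} (R : A -> A -> Prop) n x : has_size (cls R x) n -> countable (cls R x).
Proof.
  intros [f [Hi _]]. exists (fun c => proj1_sig (f c)). intros a b H. apply Hi, sig_eq, H.
Qed.

Lemma omega1_uncountable A : size_omega1 A -> ~ countable A.
Proof. intros [lt H]; tauto. Qed.

Lemma omega1_AL {A} (R : A -> A -> Prop) x : R x x -> size_omega1 (cls R x) -> forall n, AL R n x.
Proof.
  intros Hr Hs n. destruct (classify R n x) as [H|[s [_ H]]]; auto.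
  exfalso. apply (omega1_uncountable _ Hs). eapply hs_countable, EX_hs, H.
Qed.

Lemma AL_infinite {A} (R : A -> A -> Prop) x : (forall n, AL R n x) -> infinite_class R x.
Proof.
  intros H [n Hn]. apply hs_EX in Hn. apply (proj2 Hn), H.
Qed.

Record Good {A : Type} (R : A -> A -> Prop) : Prop := {
  g_eq : is_equivalence R;
  g_single : forall l : list A, exists y, EX R 1 y /\ ~ In y l;
  g_ex : forall n, 2 <= n -> exists x, EX R n x;
  g_uniq : forall n x x', 2 <= n -> EX R n x -> EX R n x' -> R x x' }.

Lemma spec_Good {A} (R : A -> A -> Prop) : is_equivalence R -> finite_classes_spec R -> Good R.
Proof.
  intros He [[f [Hfi Hfs]] Hn]. constructor; auto.
  - intro l. set (K := map (fun k => proj1_sig (f k)) (seq 0 (S (length l)))).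
    assert (HK : NoDup K).
    { apply NoDup_map_inj; [|apply seq_NoDup]. intros a b _ _ H. apply Hfi, sig_eq, H. }
    destruct (classic (exists y, In y K /\ ~ In y l)) as [[y [Hy1 Hy2]]|Hno].
    + exists y; split; auto. apply in_map_iff in Hy1. destruct Hy1 as [k [Hk _]].
      destruct (f k) as [z Hz] eqn:E. simpl in Hk; subst z.
      destruct He as [Hr _]. split; [apply AL_1, Hr|].
      intros [l2 [H1 [H2 H3]]]. destruct l2 as [|a [|b [|]]]; simpl in H2; try lia.
      assert (a = y) by (apply Hz, H3; simpl; auto).
      assert (b = y) by (apply Hz, H3; simpl; auto). subst.
      apply NoDup_cons_iff in H1; simpl in H1; tauto.
    + exfalso. assert (incl K l).
      { intros y Hy. apply NNPP; intro; apply Hno; eauto. }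
      apply NoDup_incl_length in H; auto. unfold K in H. rewrite length_map, length_seq in H. lia.
  - intros n Hn2. destruct (Hn n Hn2) as [x [Hx _]]. exists x; apply hs_EX, Hx.
  - intros n x x' Hn2 H1 H2. destruct (Hn n Hn2) as [z [_ Hz]].
    destruct He as [_ [Hs Ht]]. apply Ht with z; [apply Hs|]; apply Hz, EX_hs; auto.
Qed.

Definition injL {A B} (L : list (A * B)) : Prop :=
  forall p q, In p L -> In q L -> (fst p = fst q <-> snd p = snd q).

Lemma fresh_gen {A B} (R : A -> A -> Prop) (Sg : B -> B -> Prop) (L : list (A * B)) x y0 :
  is_equivalence R -> NoDup L -> injL L -> ~ In x (map fst L) ->
  (forall m, m <= S (length L) -> AL R m x -> AL Sg m y0) ->
  (forall q, In q L -> Sg y0 (snd q) -> R x (fst q)) ->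
  exists y, Sg y0 y /\ ~ In y (map snd L).
Proof.
  intros [Hr [Hs Ht]] HN Hinj Hx Hal Hback.
  set (C := filter (fun q => if excluded_middle_informative (R x (fst q)) then true else false) L).
  assert (HC : forall q, In q C <-> In q L /\ R x (fst q)).
  { intro q. unfold C. rewrite filter_In.
    destruct (excluded_middle_informative (R x (fst q))); split; intuition congruence. }
  assert (HCN : NoDup (map fst C)).
  { apply NoDup_map_inj; [|apply NoDup_filter; auto].
    intros [a b] [a' b'] Ha Hb Heq. apply HC in Ha, Hb. simpl in Heq.
    assert (b = b') by (apply (Hinj (a,b) (a',b')); tauto). subst; auto. }
  assert (Hlen : length C <= length L) by apply filter_length_le.
  assert (HAL : AL R (S (length C)) x).
  { exists (x :: map fst C). split; [|split].
    - constructor; auto. intro Hin. apply Hx. apply in_map_iff in Hin.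
      destruct Hin as [q [Hq Hq']]. apply HC in Hq'. apply in_map_iff; exists q; tauto.
    - simpl; rewrite length_map; auto.
    - intros w [Hw|Hw]; [subst; auto|]. apply in_map_iff in Hw. destruct Hw as [q [Hq Hq']].
      apply HC in Hq'. subst; tauto. }
  apply Hal in HAL; [|lia].
  destruct (fresh Sg _ y0 (map snd C) HAL) as [y [Hy1 Hy2]]; [rewrite length_map; lia|].
  exists y; split; auto. intro Hin. apply in_map_iff in Hin. destruct Hin as [q [Hq Hq']].
  apply Hy2. apply in_map_iff. exists q. split; auto. apply HC. split; auto.
  apply Hback; auto. subst; auto.
Qed.

Lemma avoid_len {A} (R : A -> A -> Prop) (zs l : list A) :
  is_equivalence R -> ForallOrdPairs (fun a b => ~ R a b) zs ->
  (forall z, In z zs -> exists w, In w l /\ R z w) -> length zs <= length l.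
Proof.
  intros [Hr [Hs Ht]] HF. revert l. induction HF as [|z zs Hz HF IH]; intros l Hall; simpl; [lia|].
  destruct (Hall z (or_introl eq_refl)) as [w [Hw Hzw]].
  assert (length zs <= length (remove dec w l)).
  { apply IH. intros z' Hz'. destruct (Hall z' (or_intror Hz')) as [w' [Hw' Hzw']].
    exists w'; split; auto. apply in_in_remove; auto. intro; subst w'.
    rewrite Forall_forall in Hz. apply (Hz z' Hz'). eauto. }
  pose proof (remove_length_lt dec l w Hw). lia.
Qed.

Lemma big_unrel {A} (R : A -> A -> Prop) (l : list A) T :
  Good R -> exists y, AL R T y /\ forall w, In w l -> ~ R y w.
Proof.
  intro G. pose proof (g_eq R G) as He.
  assert (forall m, exists zs, length zs = m /\ ForallOrdPairs (fun a b => ~ R a b) zs /\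
           forall z, In z zs -> exists s, T + 2 <= s < T + 2 + m /\ EX R s z) as Hb.
  { intro m; induction m.
    - exists []; repeat split; [constructor|]. intros z [].
    - destruct IHm as [zs [H1 [H2 H3]]]. destruct (g_ex R G (T + 2 + m)) as [z Hz]; [lia|].
      exists (z :: zs). split; [simpl; lia|split].
      + constructor; auto. apply Forall_forall. intros z' Hz' Hr.
        destruct (H3 z' Hz') as [s [Hs1 Hs2]]. apply (EX_cls _ _ _ _ He Hr) in Hz.
        pose proof (EX_uniq _ _ _ _ Hz Hs2). lia.
      + intros z' [Hz'|Hz']; [subst z'; exists (T+2+m); split; auto; lia|].
        destruct (H3 z' Hz') as [s [Hs1 Hs2]]; exists s; split; auto; lia. }
  destruct (Hb (S (length l))) as [zs [H1 [H2 H3]]].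
  destruct (classic (exists z, In z zs /\ forall w, In w l -> ~ R z w)) as [[z [Hz1 Hz2]]|Hno].
  - exists z; split; auto. destruct (H3 z Hz1) as [s [Hs1 Hs2]].
    eapply AL_mono; [apply Hs2|lia].
  - exfalso. assert (length zs <= length l); [|lia].
    apply (avoid_len R); auto. intros z Hz. apply NNPP; intro Hn. apply Hno. exists z; split; auto.
    intros w Hw Hzw. apply Hn; eauto.
Qed.

Definition PI {A B} (R : A -> A -> Prop) (Sg : B -> B -> Prop) (T : nat) (L : list (A * B)) : Prop :=
  injL L /\
  (forall p q, In p L -> In q L -> (R (fst p) (fst q) <-> Sg (snd p) (snd q))) /\
  (forall p n, In p L -> n <= T -> (AL R n (fst p) <-> AL Sg n (snd p))).

Lemma PI_mono {A B} (R : A -> A -> Prop) (Sg : B -> B -> Prop) T T' L : T' <= T -> PI R Sg T L -> PI R Sg T' L.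
Proof. intros H [H1 [H2 H3]]; split; [|split]; auto. intros; apply H3; auto; lia. Qed.

Lemma injL_cons {A B} (L : list (A * B)) x y :
  injL L -> ~ In x (map fst L) -> ~ In y (map snd L) -> injL ((x, y) :: L).
Proof.
  intros H Hx Hy p q [Hp|Hp] [Hq|Hq]; subst; simpl; try tauto.
  - split; intro E; exfalso; [apply Hx|apply Hy]; apply in_map_iff; exists q; auto.
  - split; intro E; exfalso; [apply Hx|apply Hy]; apply in_map_iff; exists p; auto.
  - apply H; auto.
Qed.

Lemma PI_cons {A B} (R : A -> A -> Prop) (Sg : B -> B -> Prop) T L x y :
  is_equivalence R -> is_equivalence Sg ->
  PI R Sg T L -> ~ In x (map fst L) -> ~ In y (map snd L) ->
  (forall q, In q L -> (R x (fst q) <-> Sg y (snd q))) ->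
  (forall n, n <= T -> (AL R n x <-> AL Sg n y)) ->
  PI R Sg T ((x, y) :: L).
Proof.
  intros [Rr [Rs Rt]] [Sr [Ss St]] [H1 [H2 H3]] Hx Hy Hq Hn. split; [apply injL_cons; auto|split].
  - intros p q [Hp|Hp] [Hq'|Hq']; subst; simpl; try (split; auto; fail); auto.
    split; intro E; [apply Ss, Hq, Rs|apply Rs, Hq, Ss]; auto.
  - intros p n [Hp|Hp] Hle; subst; simpl; auto.
Qed.

Lemma NoDup_cons_pair {A B} (L : list (A * B)) x y : NoDup L -> ~ In x (map fst L) -> NoDup ((x, y) :: L).
Proof.
  intros H Hx. constructor; auto. intro Hin. apply Hx, in_map_iff. exists (x, y); auto.
Qed.

Lemma PI_EX {A B} (R : A -> A -> Prop) (Sg : B -> B -> Prop) T L s q :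
  PI R Sg T L -> In q L -> S s <= T -> (EX Sg s (snd q) -> EX R s (fst q)).
Proof.
  intros [_ [_ H3]] Hq Hs [E1 E2]. split.
  - apply H3; auto; lia.
  - intro E; apply E2. apply H3; auto.
Qed.

Lemma PI_ext {A B} (R : A -> A -> Prop) (Sg : B -> B -> Prop) k L :
  Good R -> Good Sg -> NoDup L -> PI R Sg (S k + length L) L ->
  forall x, exists y L', NoDup L' /\ PI R Sg (k + length L') L' /\ In (x, y) L' /\ incl L L'.
Proof.
  intros GR GS HN HP x.
  pose proof (g_eq R GR) as ER. pose proof (g_eq Sg GS) as ES.
  pose proof ER as [Rr [Rs Rt]]. pose proof ES as [Sr [Ss St]].
  pose proof HP as [H1 [H2 H3]].
  destruct (classic (In x (map fst L))) as [Hx|Hx].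
  { apply in_map_iff in Hx. destruct Hx as [p [Hp Hpl]]. exists (snd p), L.
    split; auto. split; [eapply PI_mono; [|apply HP]; lia|]. split; [|apply incl_refl].
    subst; destruct p; auto. }
  assert (Hfin : forall y, ~ In y (map snd L) ->
     (forall q, In q L -> (R x (fst q) <-> Sg y (snd q))) ->
     (forall n, n <= S k + length L -> (AL R n x <-> AL Sg n y)) ->
     exists y L', NoDup L' /\ PI R Sg (k + length L') L' /\ In (x, y) L' /\ incl L L').
  { intros y Hy Hq Hn. exists y, ((x, y) :: L). split; [apply NoDup_cons_pair; auto|].
    split; [|split; [simpl; auto|intros a Ha; simpl; auto]].
    simpl. replace (k + S (length L)) with (S k + length L) by lia.
    apply PI_cons; auto. }
  destruct (classic (exists p, In p L /\ R (fst p) x)) as [[p0 [Hp0 Hp0x]]|Hno].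
  - destruct (fresh_gen R Sg L x (snd p0) ER HN H1 Hx) as [y [Hy1 Hy2]].
    + intros m Hm Hal. apply (H3 p0 m Hp0); [lia|]. eapply AL_cls; [exact ER|apply Rs; exact Hp0x|exact Hal].
    + intros q Hq Hs. apply Rt with (fst p0); auto. apply H2; auto.
    + apply (Hfin y); auto.
      * intros q Hq. pose proof (H2 p0 q Hp0 Hq) as Hpq. split; intro E.
        -- apply St with (snd p0); [apply Ss; auto|]. apply Hpq. eapply Rt; eauto.
        -- apply Rt with (fst p0); [apply Rs; auto|]. apply Hpq. eapply St; eauto.
      * intros n Hn. pose proof (H3 p0 n Hp0 Hn) as Hpn. split; intro E.
        -- eapply AL_cls; [exact ES|exact Hy1|]. apply Hpn. eapply AL_cls; [exact ER|apply Rs; exact Hp0x|exact E].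
        -- eapply AL_cls; [exact ER|exact Hp0x|]. apply Hpn. eapply AL_cls; [exact ES|apply Ss; exact Hy1|exact E].
  - assert (Hnr : forall q, In q L -> ~ R x (fst q)).
    { intros q Hq Hr. apply Hno. exists q; split; auto. }
    destruct (classify R (S k + length L) x) as [Hal|[s [Hs Hex]]].
    + destruct (big_unrel Sg (map snd L) (S k + length L) GS) as [y [Hy1 Hy2]].
      apply (Hfin y).
      * intro Hin. apply (Hy2 y Hin), Sr.
      * intros q Hq. split; intro E; [exfalso; eapply Hnr; eauto|].
        exfalso; apply (Hy2 (snd q)); auto. apply in_map_iff; exists q; auto.
      * intros n Hn. split; intro; eapply AL_mono; eauto.
    + destruct s as [|[|s]].
      * exfalso. apply (proj2 Hex), AL_1, Rr.
      * destruct (g_single Sg GS (map snd L)) as [y [Hy1 Hy2]]. apply (Hfin y); auto.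
        -- intros q Hq. split; intro E; [exfalso; eapply Hnr; eauto|].
           exfalso. apply EX1_single in E; auto. apply Hy2. apply in_map_iff; exists q; auto.
        -- intros n Hn. rewrite (EX_AL _ _ n _ Hex), (EX_AL _ _ n _ Hy1). tauto.
      * destruct (g_ex Sg GS (S (S s))) as [y Hy]; [lia|]. apply (Hfin y).
        -- intro Hin. apply in_map_iff in Hin. destruct Hin as [q [Hq Hq']].
           apply (Hnr q Hq'). apply (g_uniq R GR (S (S s))); [lia|auto|].
           apply (PI_EX R Sg _ L (S (S s)) q HP Hq' ltac:(lia)). rewrite Hq; auto.
        -- intros q Hq. split; intro E; [exfalso; eapply Hnr; eauto|].
           exfalso. apply (Hnr q Hq). apply (g_uniq R GR (S (S s))); [lia|auto|].
           apply (PI_EX R Sg _ L (S (S s)) q HP Hq ltac:(lia)).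
           eapply EX_cls; [exact ES|exact E|exact Hy].
        -- intros n Hn. rewrite (EX_AL _ _ n _ Hex), (EX_AL _ _ n _ Hy). tauto.
Qed.

Definition swapL {A B} (L : list (A * B)) : list (B * A) := map (fun p => (snd p, fst p)) L.

Lemma swapL_invol {A B} (L : list (A * B)) : swapL (swapL L) = L.
Proof. unfold swapL. rewrite map_map. rewrite <- (map_id L) at 2. apply map_ext. intros [a b]; auto. Qed.

Lemma In_swapL {A B} (L : list (A * B)) x y : In (y, x) (swapL L) <-> In (x, y) L.
Proof.
  unfold swapL. rewrite in_map_iff. split.
  - intros [[a b] [E H]]. simpl in E. inversion E; subst; auto.
  - intro H. exists (x, y); auto.
Qed.

Lemma In_swapL' {A B} (L : list (A * B)) p : In p (swapL L) <-> In (snd p, fst p) L.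
Proof. destruct p; apply In_swapL. Qed.

Lemma NoDup_swapL {A B} (L : list (A * B)) : NoDup L -> NoDup (swapL L).
Proof.
  intro H. apply NoDup_map_inj; auto. intros [a b] [c d] _ _ E. simpl in E. inversion E; auto.
Qed.

Lemma PI_swap {A B} (R : A -> A -> Prop) (Sg : B -> B -> Prop) T L : PI R Sg T L -> PI Sg R T (swapL L).
Proof.
  intros [H1 [H2 H3]]. split; [|split].
  - intros p q Hp Hq. apply In_swapL' in Hp, Hq. specialize (H1 _ _ Hp Hq). simpl in H1. tauto.
  - intros p q Hp Hq. apply In_swapL' in Hp, Hq. specialize (H2 _ _ Hp Hq). simpl in H2. tauto.
  - intros p n Hp Hn. apply In_swapL' in Hp. specialize (H3 _ _ Hp Hn). simpl in H3. tauto.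
Qed.

Lemma length_swapL {A B} (L : list (A * B)) : length (swapL L) = length L.
Proof. apply length_map. Qed.

Lemma PI_back {A B} (R : A -> A -> Prop) (Sg : B -> B -> Prop) k L :
  Good R -> Good Sg -> NoDup L -> PI R Sg (S k + length L) L ->
  forall y, exists x L', NoDup L' /\ PI R Sg (k + length L') L' /\ In (x, y) L' /\ incl L L'.
Proof.
  intros GR GS HN HP y.
  destruct (PI_ext Sg R k (swapL L) GS GR (NoDup_swapL _ HN)) with (x := y) as [x [L'' [H1 [H2 [H3 H4]]]]].
  { rewrite length_swapL. apply PI_swap, HP. }
  exists x, (swapL L''). split; [apply NoDup_swapL; auto|]. split.
  - rewrite length_swapL. apply PI_swap in H2. exact H2.
  - split; [apply In_swapL, H3|]. intros p Hp. apply In_swapL'. apply H4. apply In_swapL.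
    simpl. destruct p; auto.
Qed.

Fixpoint qd (p : fo) : nat :=
  match p with
  | foEq _ _ | foR _ _ => 0
  | foNot q => qd q
  | foAnd q r | foOr q r => max (qd q) (qd r)
  | foAll _ q | foEx _ q => S (qd q)
  end.

Definition Inv {A B} (R : A -> A -> Prop) (Sg : B -> B -> Prop) k (a : nat -> A) (b : nat -> B) : Prop :=
  exists L, NoDup L /\ PI R Sg (k + length L) L /\ forall i, In (a i, b i) L.

Lemma Inv_upd {A B} (L L' : list (A * B)) (a : nat -> A) (b : nat -> B) i x y :
  (forall j, In (a j, b j) L) -> In (x, y) L' -> incl L L' -> forall j, In (upd a i x j, upd b i y j) L'.
Proof.
  intros H1 H2 H3 j. unfold upd. destruct (Nat.eqb j i); auto.
Qed.

Lemma fo_transfer {A B} (R : A -> A -> Prop) (Sg : B -> B -> Prop) :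
  Good R -> Good Sg -> forall p k a b, qd p <= k -> Inv R Sg k a b -> (fo_sat R a p <-> fo_sat Sg b p).
Proof.
  intros GR GS p. induction p; intros k a b Hk [L [HN [HP Hc]]]; simpl in *.
  - destruct HP as [H1 _]. apply (H1 _ _ (Hc i) (Hc j)).
  - destruct HP as [_ [H2 _]]. apply (H2 _ _ (Hc i) (Hc j)).
  - rewrite (IHp k a b); [tauto|auto|exists L; auto].
  - rewrite (IHp1 k a b), (IHp2 k a b); try tauto; try lia; exists L; auto.
  - rewrite (IHp1 k a b), (IHp2 k a b); try tauto; try lia; exists L; auto.
  - destruct k as [|k]; [lia|]. split.
    + intros Hx y. destruct (PI_back R Sg k L GR GS HN HP y) as [x [L' [H1 [H2 [H3 H4]]]]].
      apply (IHp k (upd a i x)); [lia| |auto]. exists L'; split; auto; split; auto. eapply Inv_upd; eauto.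
    + intros Hy x. destruct (PI_ext R Sg k L GR GS HN HP x) as [y [L' [H1 [H2 [H3 H4]]]]].
      apply (IHp k (upd a i x) (upd b i y)); [lia| |auto]. exists L'; split; auto; split; auto. eapply Inv_upd; eauto.
  - destruct k as [|k]; [lia|]. split.
    + intros [x Hx]. destruct (PI_ext R Sg k L GR GS HN HP x) as [y [L' [H1 [H2 [H3 H4]]]]].
      exists y. apply (IHp k (upd a i x) (upd b i y)); [lia| |auto]. exists L'; split; auto; split; auto. eapply Inv_upd; eauto.
    + intros [y Hy]. destruct (PI_back R Sg k L GR GS HN HP y) as [x [L' [H1 [H2 [H3 H4]]]]].
      exists x. apply (IHp k (upd a i x) (upd b i y)); [lia| |auto]. exists L'; split; auto; split; auto. eapply Inv_upd; eauto.
Qed.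

Lemma fo_agree {A} (R : A -> A -> Prop) p : forall a a', (forall v, fo_free v p -> a v = a' v) ->
  (fo_sat R a p <-> fo_sat R a' p).
Proof.
  induction p; intros a a' H; simpl.
  - rewrite (H i), (H j); [tauto| |]; constructor; auto.
  - rewrite (H i), (H j); [tauto| |]; constructor; auto.
  - rewrite (IHp a a'); [tauto|]. intros v Hv; apply H; constructor; auto.
  - rewrite (IHp1 a a'), (IHp2 a a'); [tauto|intros v Hv; apply H; apply fofree_and2; auto|intros v Hv; apply H; apply fofree_and1; auto].
  - rewrite (IHp1 a a'), (IHp2 a a'); [tauto|intros v Hv; apply H; apply fofree_or2; auto|intros v Hv; apply H; apply fofree_or1; auto].
  - split; intros Hx x; [rewrite <- (IHp (upd a i x))|rewrite (IHp (upd a i x) (upd a' i x))]; auto;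
    intros v Hv; unfold upd; destruct (Nat.eqb v i) eqn:E; auto;
    apply Nat.eqb_neq in E; apply H; constructor; auto.
  - split; intros [x Hx]; exists x; [rewrite <- (IHp (upd a i x))|rewrite (IHp (upd a i x) (upd a' i x))]; auto;
    intros v Hv; unfold upd; destruct (Nat.eqb v i) eqn:E; auto;
    apply Nat.eqb_neq in E; apply H; constructor; auto.
Qed.

Lemma elem_equiv_good {A B} (R : A -> A -> Prop) (Sg : B -> B -> Prop) :
  Good R -> Good Sg -> forall p, fo_sentence p -> (forall a, fo_sat R a p) -> (forall b, fo_sat Sg b p).
Proof.
  intros GR GS p Hs Ha b.
  rewrite (fo_agree Sg p b (fun _ => b 0)) by (intros v Hv; exfalso; apply (Hs v Hv)).
  destruct (PI_back R Sg (qd p) [] GR GS (NoDup_nil _)) with (y := b 0) as [x [L' [H1 [H2 [H3 H4]]]]].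
  { split; [|split]; intros p0; simpl; tauto. }
  apply (fo_transfer R Sg GR GS p (qd p) (fun _ => x)); auto. exists L'; split; auto.
Qed.

Lemma Good_elem {A B} (R : A -> A -> Prop) (Sg : B -> B -> Prop) : Good R -> Good Sg -> elem_equiv R Sg.
Proof.
  intros GR GS p Hs. split; apply elem_equiv_good; auto.
Qed.

Lemma sat_agree {A} (R : A -> A -> Prop) p : forall a a', (forall v, free v p -> a v = a' v) ->
  (sat R a p <-> sat R a' p).
Proof.
  induction p; intros a a' Hag; simpl.
  - rewrite (Hag i), (Hag j); [tauto| |]; constructor; auto.
  - rewrite (Hag i), (Hag j); [tauto| |]; constructor; auto.
  - rewrite (IHp a a'); [tauto|]. intros v Hv; apply Hag; constructor; auto.
  - split; intros Hk k; specialize (Hk k); [rewrite <- (H k a a')|rewrite (H k a a')]; auto;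
      intros v Hv; apply Hag; econstructor; eauto.
  - split; intros [k Hk]; exists k; [rewrite <- (H k a a')|rewrite (H k a a')]; auto;
      intros v Hv; apply Hag; econstructor; eauto.
  - split; intros Hx x; [rewrite <- (IHp (upd a i x))|rewrite (IHp (upd a i x) (upd a' i x))]; auto;
    intros v Hv; unfold upd; destruct (Nat.eqb v i) eqn:E; auto;
    apply Nat.eqb_neq in E; apply Hag; constructor; auto.
  - split; intros [x Hx]; exists x; [rewrite <- (IHp (upd a i x))|rewrite (IHp (upd a i x) (upd a' i x))]; auto;
    intros v Hv; unfold upd; destruct (Nat.eqb v i) eqn:E; auto;
    apply Nat.eqb_neq in E; apply Hag; constructor; auto.
Qed.

Definition PP {A B} (M : A -> B -> Prop) (L : list (A * B)) : Prop :=
  injL L /\ forall p, In p L -> M (fst p) (snd p).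

Section Pos.
Context {A B : Type} (R : A -> A -> Prop) (Sg : B -> B -> Prop) (M : A -> B -> Prop).
Hypothesis Hatom : forall x x' y y', M x y -> M x' y' -> (x = x' <-> y = y') -> R x x' -> Sg y y'.
Hypothesis Hforth : forall L, NoDup L -> PP M L -> forall x, ~ In x (map fst L) ->
  exists y, ~ In y (map snd L) /\ M x y.
Hypothesis Hback : forall L, NoDup L -> PP M L -> forall y, ~ In y (map snd L) ->
  exists x, ~ In x (map fst L) /\ M x y.

Lemma PP_ext L : NoDup L -> PP M L -> forall x, exists y L', NoDup L' /\ PP M L' /\ In (x, y) L' /\ incl L L'.
Proof.
  intros HN HP x. destruct (classic (In x (map fst L))) as [Hx|Hx].
  - apply in_map_iff in Hx. destruct Hx as [p [Hp Hpl]]. exists (snd p), L.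
    split; auto; split; auto; split; [subst; destruct p; auto|apply incl_refl].
  - destruct (Hforth L HN HP x Hx) as [y [Hy Hm]]. exists y, ((x, y) :: L).
    split; [apply NoDup_cons_pair; auto|]. split; [|split; [simpl; auto|intros q Hq; simpl; auto]].
    destruct HP as [H1 H2]. split; [apply injL_cons; auto|]. intros p [Hp|Hp]; [subst; auto|auto].
Qed.

Lemma PP_back L : NoDup L -> PP M L -> forall y, exists x L', NoDup L' /\ PP M L' /\ In (x, y) L' /\ incl L L'.
Proof.
  intros HN HP y. destruct (classic (In y (map snd L))) as [Hy|Hy].
  - apply in_map_iff in Hy. destruct Hy as [p [Hp Hpl]]. exists (fst p), L.
    split; auto; split; auto; split; [subst; destruct p; auto|apply incl_refl].
  - destruct (Hback L HN HP y Hy) as [x [Hx Hm]]. exists x, ((x, y) :: L).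
    split; [apply NoDup_cons_pair; auto|]. split; [|split; [simpl; auto|intros q Hq; simpl; auto]].
    destruct HP as [H1 H2]. split; [apply injL_cons; auto|]. intros p [Hp|Hp]; [subst; auto|auto].
Qed.

Definition PInv (a : nat -> A) (b : nat -> B) : Prop :=
  exists L, NoDup L /\ PP M L /\ forall i, In (a i, b i) L.

Lemma pos_transfer p : positive p -> forall a b, PInv a b -> sat R a p -> sat Sg b p.
Proof.
  induction 1; intros a b [L [HN [[H1 H2] Hc]]]; simpl.
  - apply (H1 _ _ (Hc i) (Hc j)).
  - apply (Hatom _ _ _ _ (H2 _ (Hc i)) (H2 _ (Hc j)) (H1 _ _ (Hc i) (Hc j))).
  - intros E1 E2. apply E1. apply (H1 _ _ (Hc i) (Hc j)), E2.
  - intros Hk k. apply (H0 k a b); auto. exists L; split; [exact HN|split; [split; assumption|exact Hc]].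
  - intros [k Hk]. exists k. apply (H0 k a b); auto. exists L; split; [exact HN|split; [split; assumption|exact Hc]].
  - intros Hx y. destruct (PP_back L HN (conj H1 H2) y) as [x [L' [E1 [E2 [E3 E4]]]]].
    apply (IHpositive (upd a i x)); auto. exists L'; split; auto; split; auto. eapply Inv_upd; eauto.
  - intros [x Hx]. destruct (PP_ext L HN (conj H1 H2) x) as [y [L' [E1 [E2 [E3 E4]]]]].
    exists y. apply (IHpositive (upd a i x)); auto. exists L'; split; auto; split; auto. eapply Inv_upd; eauto.
Qed.

Lemma pos_sentence p : sentence p -> positive p -> (forall a, sat R a p) -> forall b, sat Sg b p.
Proof.
  intros Hs Hp Ha b.
  rewrite (sat_agree Sg p b (fun _ => b 0)) by (intros v Hv; exfalso; apply (Hs v Hv)).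
  destruct (Hback [] (NoDup_nil _)) with (y := b 0) as [x [_ Hm]].
  { split; [intros p0 q0 []|intros p0 []]. }
  { simpl; tauto. }
  apply (pos_transfer p Hp (fun _ => x)); auto. exists [(x, b 0)].
  split; [repeat constructor; simpl; tauto|]. split; [|simpl; auto].
  split; [intros p0 q0 [E|[]] [E'|[]]; subst; tauto|]. intros p0 [E|[]]; subst; auto.
Qed.
End Pos.

Lemma map_fst_swapL {A B} (L : list (A * B)) : map fst (swapL L) = map snd L.
Proof. unfold swapL; rewrite map_map; reflexivity. Qed.
Lemma map_snd_swapL {A B} (L : list (A * B)) : map snd (swapL L) = map fst L.
Proof. unfold swapL; rewrite map_map; reflexivity. Qed.
Lemma injL_swapL {A B} (L : list (A * B)) : injL L -> injL (swapL L).
Proof.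
  intros H p q Hp Hq. apply In_swapL' in Hp, Hq. specialize (H _ _ Hp Hq). simpl in H. tauto.
Qed.

Lemma inf_noEX {A} (R : A -> A -> Prop) z x n : is_equivalence R ->
  (forall k, AL R k z) -> R z x -> ~ EX R n x.
Proof. intros He H Hzx [_ E]. apply E. eapply AL_cls; eauto. Qed.

Lemma fresh_inf {A} (R : A -> A -> Prop) z (l : list A) : (forall k, AL R k z) -> exists w, R z w /\ ~ In w l.
Proof. intro H. apply (fresh R (S (length l))); auto. Qed.

Section Concrete.
Context {X Y : Type} (rho : X -> X -> Prop) (sigma : Y -> Y -> Prop).
Hypothesis GX : Good rho.
Hypothesis GY : Good sigma.
Variable x0 : X.
Hypothesis HX0 : forall n, AL rho n x0.
Hypothesis HXinf : forall x, (forall n, AL rho n x) -> rho x0 x.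
Variables y1 y2 : Y.
Hypothesis HY1 : forall n, AL sigma n y1.
Hypothesis HY2 : forall n, AL sigma n y2.
Hypothesis HYinf : forall y, (forall n, AL sigma n y) -> sigma y1 y \/ sigma y2 y.

Definition M1 (x : X) (y : Y) : Prop :=
  (rho x0 x /\ sigma y1 y) \/ (exists n, 2 <= n /\ EX rho n x /\ EX sigma n y) \/
  (EX rho 1 x /\ (EX sigma 1 y \/ sigma y2 y)).

Definition M2 (y : Y) (x : X) : Prop :=
  ((sigma y1 y \/ sigma y2 y) /\ rho x0 x) \/ (exists n, 1 <= n /\ EX sigma n y /\ EX rho n x).

Let ER := g_eq rho GX.
Let ES := g_eq sigma GY.

Lemma M1_atom x x' y y' : M1 x y -> M1 x' y' -> (x = x' <-> y = y') -> rho x x' -> sigma y y'.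
Proof.
  pose proof ER as [Rr [Rs Rt]]. pose proof ES as [Sr [Ss St]].
  intros Hm Hm' Heq Hr.
  destruct Hm as [[A1 A2]|[[n [n2 [A1 A2]]]|[A1 A2]]];
  destruct Hm' as [[B1 B2]|[[m [m2 [B1 B2]]]|[B1 B2]]].
  - eauto.
  - exfalso; apply (inf_noEX rho x0 x' m ER HX0); eauto.
  - exfalso; apply (inf_noEX rho x0 x' 1 ER HX0); eauto.
  - exfalso; apply (inf_noEX rho x0 x n ER HX0); [apply Rt with x'; auto|auto].
  - assert (EX rho m x) by (eapply EX_cls; [exact ER|apply Rs; exact Hr|exact B1]).
    assert (n = m) by exact (EX_uniq _ _ _ _ A1 H). subst m. apply (g_uniq sigma GY n); auto.
  - assert (EX rho 1 x) by (eapply EX_cls; [exact ER|apply Rs; exact Hr|exact B1]).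
    assert (n = 1) by exact (EX_uniq _ _ _ _ A1 H). lia.
  - assert (x' = x) by exact (EX1_single rho x x' (Rr x) A1 Hr). subst x'. assert (y = y') by (apply Heq; auto). subst; auto.
  - assert (x' = x) by exact (EX1_single rho x x' (Rr x) A1 Hr). subst x'. assert (y = y') by (apply Heq; auto). subst; auto.
  - assert (x' = x) by exact (EX1_single rho x x' (Rr x) A1 Hr). subst x'. assert (y = y') by (apply Heq; auto). subst; auto.
Qed.

Lemma M1_forth L : NoDup L -> PP M1 L -> forall x, ~ In x (map fst L) -> exists y, ~ In y (map snd L) /\ M1 x y.
Proof.
  pose proof ER as [Rr [Rs Rt]]. pose proof ES as [Sr [Ss St]].
  intros HN [HI HM] x Hx.
  destruct (classify_inf rho x (Rr x)) as [Hinf|[n [n1 Hex]]].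
  - destruct (fresh_inf sigma y1 (map snd L) HY1) as [y [Hy1 Hy2]]. exists y; split; auto.
    left; split; auto.
  - destruct n as [|[|n]]; [lia| |].
    + destruct (g_single sigma GY (map snd L)) as [y [Hy1 Hy2]]. exists y; split; auto.
      right; right; split; auto.
    + destruct (g_ex sigma GY (S (S n))) as [yn Hyn]; [lia|].
      destruct (fresh_gen rho sigma L x yn ER HN HI Hx) as [y [Hy1 Hy2]].
      * intros m _ Hal. apply (EX_AL _ _ m _ Hyn). apply (EX_AL _ _ m _ Hex); auto.
      * intros q Hq Hs. pose proof (EX_cls _ _ _ _ ES Hs Hyn) as HE.
        destruct (HM q Hq) as [[A1 A2]|[[m [m2 [A1 A2]]]|[A1 [A2|A2]]]].
        -- exfalso; eapply (inf_noEX sigma y1); eauto.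
        -- assert (m = S (S n)) by exact (EX_uniq _ _ _ _ A2 HE). subst m.
           apply (g_uniq rho GX (S (S n))); [lia|auto|auto].
        -- assert (1 = S (S n)) by exact (EX_uniq _ _ _ _ A2 HE). lia.
        -- exfalso; eapply (inf_noEX sigma y2); eauto.
      * exists y; split; auto. right; left. exists (S (S n)); split; [lia|split; auto].
        eapply EX_cls; eauto.
Qed.

Lemma M1_back L : NoDup L -> PP M1 L -> forall y, ~ In y (map snd L) -> exists x, ~ In x (map fst L) /\ M1 x y.
Proof.
  pose proof ER as [Rr [Rs Rt]]. pose proof ES as [Sr [Ss St]].
  intros HN [HI HM] y Hy.
  destruct (classify_inf sigma y (Sr y)) as [Hinf|[n [n1 Hex]]].
  - destruct (HYinf y Hinf) as [H1|H2].
    + destruct (fresh_inf rho x0 (map fst L) HX0) as [x [Hx1 Hx2]]. exists x; split; auto.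
      left; split; auto.
    + destruct (g_single rho GX (map fst L)) as [x [Hx1 Hx2]]. exists x; split; auto.
      right; right; split; auto.
  - destruct n as [|[|n]]; [lia| |].
    + destruct (g_single rho GX (map fst L)) as [x [Hx1 Hx2]]. exists x; split; auto.
      right; right; split; auto.
    + destruct (g_ex rho GX (S (S n))) as [xn Hxn]; [lia|].
      destruct (fresh_gen sigma rho (swapL L) y xn ES (NoDup_swapL _ HN) (injL_swapL _ HI))
        as [x [Hx1 Hx2]].
      * rewrite map_fst_swapL; auto.
      * intros m _ Hal. apply (EX_AL _ _ m _ Hxn). apply (EX_AL _ _ m _ Hex); auto.
      * intros q Hq Hs. apply In_swapL' in Hq. pose proof (EX_cls _ _ _ _ ER Hs Hxn) as HE.
        destruct (HM _ Hq) as [[A1 A2]|[[m [m2 [A1 A2]]]|[A1 A2]]]; simpl in *.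
        -- exfalso; eapply (inf_noEX rho x0); eauto.
        -- assert (m = S (S n)) by exact (EX_uniq _ _ _ _ A1 HE). subst m.
           apply (g_uniq sigma GY (S (S n))); [lia|auto|auto].
        -- assert (1 = S (S n)) by exact (EX_uniq _ _ _ _ A1 HE). lia.
      * rewrite map_snd_swapL in Hx2. exists x; split; auto. right; left.
        exists (S (S n)); split; [lia|split; auto]. eapply EX_cls; eauto.
Qed.

Lemma M2_atom y y' x x' : M2 y x -> M2 y' x' -> (y = y' <-> x = x') -> sigma y y' -> rho x x'.
Proof.
  pose proof ER as [Rr [Rs Rt]]. pose proof ES as [Sr [Ss St]].
  intros Hm Hm' Heq Hs.
  destruct Hm as [[[A1|A1] A2]|[n [n1 [A1 A2]]]];
  destruct Hm' as [[[B1|B1] B2]|[m [m1 [B1 B2]]]].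
  - eauto.
  - eauto.
  - exfalso; apply (inf_noEX sigma y1 y' m ES HY1); eauto.
  - eauto.
  - eauto.
  - exfalso; apply (inf_noEX sigma y2 y' m ES HY2); eauto.
  - exfalso; apply (inf_noEX sigma y1 y n ES HY1); eauto.
  - exfalso; apply (inf_noEX sigma y2 y n ES HY2); eauto.
  - assert (EX sigma m y) by (eapply EX_cls; [exact ES|apply Ss; exact Hs|exact B1]).
    assert (n = m) by exact (EX_uniq _ _ _ _ A1 H). subst m.
    destruct n as [|[|n]]; [lia| |].
    + assert (y' = y) by exact (EX1_single sigma y y' (Sr y) A1 Hs). subst y'.
      assert (x = x') by (apply Heq; auto). subst; auto.
    + apply (g_uniq rho GX (S (S n))); auto; lia.
Qed.

Lemma M2_forth L : NoDup L -> PP M2 L -> forall y, ~ In y (map fst L) -> exists x, ~ In x (map snd L) /\ M2 y x.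
Proof.
  pose proof ER as [Rr [Rs Rt]]. pose proof ES as [Sr [Ss St]].
  intros HN [HI HM] y Hy.
  destruct (classify_inf sigma y (Sr y)) as [Hinf|[n [n1 Hex]]].
  - destruct (fresh_inf rho x0 (map snd L) HX0) as [x [Hx1 Hx2]]. exists x; split; auto.
    left; split; auto.
  - destruct n as [|[|n]]; [lia| |].
    + destruct (g_single rho GX (map snd L)) as [x [Hx1 Hx2]]. exists x; split; auto.
      right; exists 1; split; auto.
    + destruct (g_ex rho GX (S (S n))) as [xn Hxn]; [lia|].
      destruct (fresh_gen sigma rho L y xn ES HN HI Hy) as [x [Hx1 Hx2]].
      * intros m _ Hal. apply (EX_AL _ _ m _ Hxn). apply (EX_AL _ _ m _ Hex); auto.
      * intros q Hq Hs. pose proof (EX_cls _ _ _ _ ER Hs Hxn) as HE.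
        destruct (HM q Hq) as [[A1 A2]|[m [m1 [A1 A2]]]].
        -- exfalso; eapply (inf_noEX rho x0); eauto.
        -- assert (m = S (S n)) by exact (EX_uniq _ _ _ _ A2 HE). subst m.
           apply (g_uniq sigma GY (S (S n))); [lia|auto|auto].
      * exists x; split; auto. right. exists (S (S n)); split; [lia|split; auto].
        eapply EX_cls; eauto.
Qed.

Lemma M2_back L : NoDup L -> PP M2 L -> forall x, ~ In x (map snd L) -> exists y, ~ In y (map fst L) /\ M2 y x.
Proof.
  pose proof ER as [Rr [Rs Rt]]. pose proof ES as [Sr [Ss St]].
  intros HN [HI HM] x Hx.
  destruct (classify_inf rho x (Rr x)) as [Hinf|[n [n1 Hex]]].
  - destruct (fresh_inf sigma y1 (map fst L) HY1) as [y [Hy1 Hy2]]. exists y; split; auto.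
    left; split; auto.
  - destruct n as [|[|n]]; [lia| |].
    + destruct (g_single sigma GY (map fst L)) as [y [Hy1 Hy2]]. exists y; split; auto.
      right; exists 1; split; auto.
    + destruct (g_ex sigma GY (S (S n))) as [yn Hyn]; [lia|].
      destruct (fresh_gen rho sigma (swapL L) x yn ER (NoDup_swapL _ HN) (injL_swapL _ HI))
        as [y [Hy1 Hy2]].
      * rewrite map_fst_swapL; auto.
      * intros m _ Hal. apply (EX_AL _ _ m _ Hyn). apply (EX_AL _ _ m _ Hex); auto.
      * intros q Hq Hs. apply In_swapL' in Hq. pose proof (EX_cls _ _ _ _ ES Hs Hyn) as HE.
        destruct (HM _ Hq) as [[[A1|A1] A2]|[m [m1 [A1 A2]]]]; simpl in *.
        -- exfalso; eapply (inf_noEX sigma y1); eauto.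
        -- exfalso; eapply (inf_noEX sigma y2); eauto.
        -- assert (m = S (S n)) by exact (EX_uniq _ _ _ _ A1 HE). subst m.
           apply (g_uniq rho GX (S (S n))); [lia|auto|auto].
      * rewrite map_snd_swapL in Hy2. exists y; split; auto. right.
        exists (S (S n)); split; [lia|split; auto]. eapply EX_cls; eauto.
Qed.

Lemma pos_equiv_concrete : pos_equiv rho sigma.
Proof.
  intros p Hs Hp. split.
  - apply (pos_sentence rho sigma M1 M1_atom M1_forth M1_back p Hs Hp).
  - apply (pos_sentence sigma rho M2 M2_atom M2_forth M2_back p Hs Hp).
Qed.
End Concrete.

Lemma sq_inj n m k j : n*n + k = m*m + j -> k < n -> j < m -> n = m.
Proof. intros. destruct (Nat.lt_total n m) as [H2|[H2|H2]]; auto; nia. Qed.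

Lemma EX_list {A} (R : A -> A -> Prop) n x : EX R n x ->
  exists l, NoDup l /\ length l = n /\ forall w, R x w -> In w l.
Proof.
  intros [[l [H1 [H2 H3]]] H4]. exists l; split; auto; split; auto.
  intros w Hw. apply NNPP; intro Hn. apply H4. exists (w :: l). split; [constructor; auto|].
  split; [simpl; lia|]. intros v [Hv|Hv]; subst; auto.
Qed.

Lemma fin_countable {A} (R : A -> A -> Prop) (a0 : A) : Good R -> countably_infinite (singleton_pts R) ->
  exists g : A -> nat, forall x x', (exists n, EX R n x) -> (exists n, EX R n x') -> g x = g x' -> x = x'.
Proof.
  intros G [f1 [Hf1i Hf1s]]. pose proof (g_eq R G) as [Rr [Rs Rt]].
  set (sz := fun x => epsilon (inhabits 0) (fun n => EX R n x)).
  set (rep := fun n => epsilon (inhabits a0) (fun z => EX R n z)).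
  set (lst := fun n => epsilon (inhabits (@nil A)) (fun l => NoDup l /\ length l = n /\ forall w, R (rep n) w -> In w l)).
  set (idxn := fun x => epsilon (inhabits 0) (fun k => k < sz x /\ nth k (lst (sz x)) a0 = x)).
  set (idx1 := fun x => epsilon (inhabits 0) (fun k => proj1_sig (f1 k) = x)).
  exists (fun x => if Nat.eqb (sz x) 1 then 2 * idx1 x else 2 * (sz x * sz x + idxn x) + 1).
  assert (Hsz : forall x n, EX R n x -> sz x = n).
  { intros x n H. unfold sz. pose proof (epsilon_spec (inhabits 0) (fun n => EX R n x) (ex_intro _ n H)).
    cbv beta in H0. exact (EX_uniq _ _ _ _ H0 H). }
  assert (H1 : forall x, EX R 1 x -> proj1_sig (f1 (idx1 x)) = x).
  { intros x Hx. unfold idx1. apply (epsilon_spec (inhabits 0) (fun k => proj1_sig (f1 k) = x)).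
    assert (Hs : forall y, R x y -> y = x) by (intros y Hy; exact (EX1_single R x y (Rr x) Hx Hy)).
    destruct (Hf1s (exist _ x Hs)) as [k Hk]. exists k. rewrite Hk; reflexivity. }
  assert (H2 : forall x n, 2 <= n -> EX R n x -> idxn x < n /\ nth (idxn x) (lst n) a0 = x).
  { intros x n Hn Hx. rewrite <- (Hsz x n Hx). unfold idxn.
    apply (epsilon_spec (inhabits 0) (fun k => k < sz x /\ nth k (lst (sz x)) a0 = x)).
    rewrite (Hsz x n Hx).
    assert (Hr : EX R n (rep n)).
    { unfold rep. apply (epsilon_spec (inhabits a0) (fun z => EX R n z)). apply (g_ex R G n Hn). }
    assert (Hl : NoDup (lst n) /\ length (lst n) = n /\ forall w, R (rep n) w -> In w (lst n)).
    { unfold lst. apply (epsilon_spec (inhabits (@nil A))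
        (fun l => NoDup l /\ length l = n /\ forall w, R (rep n) w -> In w l)).
      apply EX_list; auto. }
    destruct Hl as [Hl1 [Hl2 Hl3]].
    destruct (In_nth (lst n) x a0) as [k [Hk1 Hk2]].
    { apply Hl3. apply (g_uniq R G n); auto. }
    exists k; split; [lia|auto]. }
  intros x x' [n Hn] [n' Hn'] Heq.
  rewrite (Hsz x n Hn), (Hsz x' n' Hn') in Heq.
  assert (1 <= n). { destruct n; [exfalso; apply (proj2 Hn), AL_1, Rr|lia]. }
  assert (1 <= n'). { destruct n'; [exfalso; apply (proj2 Hn'), AL_1, Rr|lia]. }
  destruct (Nat.eqb_spec n 1); destruct (Nat.eqb_spec n' 1); try lia.
  - subst. assert (idx1 x = idx1 x') by lia. rewrite <- (H1 x Hn), <- (H1 x' Hn'). congruence.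
  - destruct (H2 x n ltac:(lia) Hn) as [K1 K2]. destruct (H2 x' n' ltac:(lia) Hn') as [K1' K2'].
    assert (n * n + idxn x = n' * n' + idxn x') by lia.
    assert (n = n') by (eapply sq_inj; eauto). subst n'.
    assert (idxn x = idxn x') by lia. rewrite <- K2, <- K2'. congruence.
Qed.

Lemma no_cond {X Y} (rho : X -> X -> Prop) (sigma : Y -> Y -> Prop) x0 y1 y2 :
  Good rho -> is_equivalence sigma -> countably_infinite (singleton_pts rho) ->
  (forall x, (forall n, AL rho n x) -> rho x0 x) ->
  ~ sigma y1 y2 -> size_omega1 (cls sigma y1) -> size_omega1 (cls sigma y2) ->
  ~ condensable rho sigma.
Proof.
  intros G [Sr [Ss St]] Hc Hinf H12 Hs1 Hs2 [F [Fi [Fs Fh]]].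
  pose proof (g_eq rho G) as [Rr [Rs Rt]].
  destruct (fin_countable rho x0 G Hc) as [g Hg].
  assert (exists yk, size_omega1 (cls sigma yk) /\ ~ sigma (F x0) yk) as [yk [Hk1 Hk2]].
  { destruct (classic (sigma (F x0) y2)) as [E|E].
    - exists y1; split; auto. intro E'. apply H12. eauto.
    - exists y2; split; auto. }
  apply (omega1_uncountable _ Hk1).
  set (Finv := fun z => epsilon (inhabits x0) (fun x => F x = z)).
  assert (HF : forall z, F (Finv z) = z).
  { intro z. unfold Finv. apply (epsilon_spec (inhabits x0) (fun x => F x = z)), Fs. }
  exists (fun c => g (Finv (proj1_sig c))).
  assert (Hfin : forall z, sigma yk z -> exists n, EX rho n (Finv z)).
  { intros z Hz. destruct (classify_inf rho (Finv z) (Rr _)) as [Hi|[n [_ Hn]]]; eauto.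
    exfalso. apply Hk2. apply St with z; auto. rewrite <- (HF z). apply Fh, Hinf, Hi. }
  intros [z Hz] [z' Hz'] E. simpl in E. apply sig_eq; simpl.
  rewrite <- (HF z), <- (HF z'). f_equal. apply Hg; auto.
Qed.
From Stdlib Require Import Bool.
Local Open Scope bool_scope.

Fixpoint exs (k n : nat) (f : formula) : formula :=
  match n with 0 => f | S n => fEx k (exs (S k) n f) end.

Fixpoint updl {A} (a : nat -> A) (k : nat) (l : list A) : nat -> A :=
  match l with [] => a | x :: l => updl (upd a k x) (S k) l end.

Lemma sat_exs {A} (R : A -> A -> Prop) n : forall k a f,
  sat R a (exs k n f) <-> exists l, length l = n /\ sat R (updl a k l) f.
Proof.
  induction n; intros k a f; simpl.
  - split; [intro H; exists []; auto|intros [l [H1 H2]]; destruct l; [auto|discriminate]].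
  - split.
    + intros [x Hx]. apply IHn in Hx. destruct Hx as [l [H1 H2]]. exists (x :: l); simpl; auto.
    + intros [[|x l] [H1 H2]]; [discriminate|]. exists x. apply IHn. exists l; simpl in *; auto.
Qed.

Lemma updl_low {A} (l : list A) : forall a k i, i < k -> updl a k l i = a i.
Proof.
  induction l; intros b k i H; simpl; auto. rewrite IHl by lia. unfold upd.
  destruct (Nat.eqb_spec i k); [lia|auto].
Qed.

Lemma updl_nth {A} (l : list A) : forall a k j d, j < length l -> updl a k l (k + j) = nth j l d.
Proof.
  induction l; intros b k j d H; simpl in *; [lia|].
  destruct j.
  - rewrite updl_low by lia. unfold upd. rewrite Nat.add_0_r, Nat.eqb_refl; auto.
  - replace (k + S j) with (S k + j) by lia. apply IHl; lia.
Qed.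

Lemma updl_nth2 {A} (l : list A) a j d : j < length l -> updl a 2 l (S (S j)) = nth j l d.
Proof. intro H. apply (updl_nth l a 2 j d H). Qed.

Definition Dn (n : nat) : formula :=
  fAnd (nat * nat) (fun ij => if (fst ij <? snd ij) && (snd ij <? n)
                              then fNot (fEq (2 + fst ij) (2 + snd ij)) else fEq 0 0).
Definition Reln (v n : nat) : formula :=
  fAnd nat (fun i => if i <? n then fR v (2 + i) else fEq 0 0).
Definition chi (v n : nat) : formula := exs 2 n (fAnd bool (fun b => if b then Dn n else Reln v n)).
Definition psi (v : nat) : formula := fAnd nat (fun n => chi v n).
Definition phi : formula :=
  fEx 0 (fEx 1 (fAnd nat (fun i => match i with 0 => fNot (fR 0 1) | 1 => psi 0 | _ => psi 1 end))).

Lemma sat_chi {A} (R : A -> A -> Prop) a v n : v < 2 -> (sat R a (chi v n) <-> AL R n (a v)).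
Proof.
  intro Hv. unfold chi. rewrite sat_exs. split.
  - intros [l [Hl H]]. simpl in H. pose proof (H true) as HD. pose proof (H false) as HR.
    simpl in HD, HR. exists l. split; [|split; auto].
    + apply (NoDup_nth l (a v)). intros i j Hi Hj E.
      destruct (Nat.lt_total i j) as [Hij|[Hij|Hij]]; auto; exfalso.
      * specialize (HD (i, j)). simpl in HD.
        assert (Hb : (i <? j) && (j <? n) = true) by (apply andb_true_iff; split; apply Nat.ltb_lt; lia).
        rewrite Hb in HD. simpl in HD. apply HD. rewrite !updl_nth2 with (d := a v) by lia. auto.
      * specialize (HD (j, i)). simpl in HD.
        assert (Hb : (j <? i) && (i <? n) = true) by (apply andb_true_iff; split; apply Nat.ltb_lt; lia).
        rewrite Hb in HD. simpl in HD. apply HD. rewrite !updl_nth2 with (d := a v) by lia. auto.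
    + intros w Hw. destruct (In_nth l w (a v) Hw) as [i [Hi Hiw]].
      specialize (HR i). assert (Hb : (i <? n) = true) by (apply Nat.ltb_lt; lia).
      rewrite Hb in HR. simpl in HR. rewrite updl_low in HR by lia.
      rewrite updl_nth2 with (d := a v) in HR by lia. subst; auto.
  - intros [l [H1 [H2 H3]]]. exists l. split; auto. simpl. intros [|].
    + simpl. intros [i j]. simpl. destruct ((i <? j) && (j <? n)) eqn:E; simpl; auto.
      apply andb_true_iff in E. destruct E as [E1 E2]. apply Nat.ltb_lt in E1, E2.
      rewrite !updl_nth2 with (d := a v) by lia. intro E.
      apply (NoDup_nth l (a v)) in E; auto; lia.
    + simpl. intro i. destruct (i <? n) eqn:E; simpl; auto.
      apply Nat.ltb_lt in E. rewrite updl_low by lia. rewrite updl_nth2 with (d := a v) by lia.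
      apply H3, nth_In; lia.
Qed.

Lemma sat_phi {A} (R : A -> A -> Prop) a :
  sat R a phi <-> exists x x', ~ R x x' /\ (forall n, AL R n x) /\ (forall n, AL R n x').
Proof.
  unfold phi. simpl. split.
  - intros [x [x' H]]. exists x, x'. pose proof (H 0) as H0. pose proof (H 1) as H1. pose proof (H 2) as H2.
    simpl in H0, H1, H2. unfold upd in *; simpl in *. split; [auto|split].
    + intro n. specialize (H1 n). apply sat_chi in H1; auto.
    + intro n. specialize (H2 n). apply sat_chi in H2; auto.
  - intros [x [x' [H0 [H1 H2]]]]. exists x, x'. intros [|[|i]]; simpl; unfold upd; simpl; auto;
      intro n; apply sat_chi; auto.
Qed.

Definition freeinv (v : nat) (f : formula) : Prop :=
  match f with
  | fEq i j | fR i j => v = i \/ v = j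
  | fNot p => free v p
  | fAnd _ ps | fOr _ ps => exists k, free v (ps k)
  | fAll i p | fEx i p => v <> i /\ free v p
  end.

Lemma free_inv v f : free v f -> freeinv v f.
Proof. destruct 1; simpl; eauto. Qed.

Lemma free_exs v n : forall k f, free v (exs k n f) -> free v f /\ ~ (k <= v < k + n).
Proof.
  induction n; intros k f H; simpl in H; [split; auto; lia|].
  apply free_inv in H. simpl in H. destruct H as [H1 H2]. apply IHn in H2. split; [tauto|lia].
Qed.

Lemma free_chi v w n : free v (chi w n) -> v = 0 \/ v = w.
Proof.
  intro H. apply free_exs in H. destruct H as [H Hr].
  apply free_inv in H. destruct H as [[|] H]; simpl in H; apply free_inv in H; destruct H as [k H].
  - destruct k as [i j]; simpl in H. destruct ((i <? j) && (j <? n)) eqn:E.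
    + apply andb_true_iff in E. destruct E as [E1 E2]. apply Nat.ltb_lt in E1, E2.
      apply free_inv in H. simpl in H. apply free_inv in H. simpl in H. lia.
    + apply free_inv in H. simpl in H. lia.
  - destruct (k <? n) eqn:E.
    + apply Nat.ltb_lt in E. apply free_inv in H. simpl in H. lia.
    + apply free_inv in H. simpl in H. lia.
Qed.

Lemma phi_sentence : sentence phi.
Proof.
  intros v H. unfold phi in H. apply free_inv in H. destruct H as [H0 H]. apply free_inv in H.
  destruct H as [H1 H]. apply free_inv in H. destruct H as [[|[|i]] H].
  - apply free_inv in H. apply free_inv in H. simpl in H. lia.
  - apply free_inv in H. destruct H as [k H]. apply free_chi in H. lia.
  - apply free_inv in H. destruct H as [k H]. apply free_chi in H. lia.
Qed.

Theorem mainTheorem16 (X : Type) (rho : X -> X -> Prop) (Y : Type) (sigma : Y -> Y -> Prop) :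
  size_omega1 X -> size_omega1 Y ->
  is_equivalence rho -> is_equivalence sigma ->
  finite_classes_spec rho -> finite_classes_spec sigma ->
  (exists x0 : X, size_omega1 (cls rho x0) /\
     (forall x, infinite_class rho x -> rho x0 x)) ->
  (exists y1 y2 : Y, ~ sigma y1 y2 /\
     size_omega1 (cls sigma y1) /\ size_omega1 (cls sigma y2) /\
     (forall y, infinite_class sigma y -> sigma y1 y \/ sigma y2 y)) ->
  elem_equiv rho sigma /\ pos_equiv rho sigma /\
  ~ bi_condensable rho sigma /\ ~ infeq rho sigma.
Proof.
  intros _ _ HeR HeS SX SY [x0 [Hx0 Hx0inf]] [y1 [y2 [H12 [Hy1 [Hy2 Hyinf]]]]].
  pose proof (spec_Good rho HeR SX) as GX. pose proof (spec_Good sigma HeS SY) as GY.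
  pose proof HeR as [Rr [Rs Rt]]. pose proof HeS as [Sr [Ss St]].
  assert (HX0 : forall n, AL rho n x0) by (apply omega1_AL; auto).
  assert (HY1 : forall n, AL sigma n y1) by (apply omega1_AL; auto).
  assert (HY2 : forall n, AL sigma n y2) by (apply omega1_AL; auto).
  assert (HXinf : forall x, (forall n, AL rho n x) -> rho x0 x) by (intros; apply Hx0inf, AL_infinite; auto).
  assert (HYinf : forall y, (forall n, AL sigma n y) -> sigma y1 y \/ sigma y2 y)
    by (intros; apply Hyinf, AL_infinite; auto).
  split; [apply Good_elem; auto|]. split.
  { exact (pos_equiv_concrete rho sigma GX GY x0 HX0 HXinf y1 y2 HY1 HY2 HYinf). }
  split.
  - intros [Hc _]. exact (no_cond rho sigma x0 y1 y2 GX HeS (proj1 SX) HXinf H12 Hy1 Hy2 Hc).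
  - intro H. specialize (H phi phi_sentence).
    assert (Hb : forall b, sat sigma b phi).
    { intro b. apply sat_phi. exists y1, y2. auto. }
    pose proof (proj2 H Hb (fun _ => x0)) as Hb2. clear Hb. rename Hb2 into Hb. apply sat_phi in Hb.
    destruct Hb as [x [x' [E1 [E2 E3]]]]. apply E1. apply Rt with x0; auto.
Qed.
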